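(* Let $n\ge 1$, $A\in\mathbb{R}^{n\times n}$ and $C\in\mathbb{R}^{1\times n}$. Assume that $(A,C)$ is an observable pair, that all eigenvalues of $A$ are nonzero, that all eigenvalues of $A$ are real, and that $(A^2,C)$ is an observable pair. Then for any $2n-1$ distinct nonnegative integers $t_1,\ldots,t_{2n-1}$, the matrix whose rows are $CA^{t_1},CA^{t_2},\ldots,CA^{t_{2n-1}}$ has rank $n$.
   Context: The setting is a linear time-invariant discrete-time single-output system $x(t+1)=Ax(t)+Bu(t)$, $y(t)=Cx(t)+Du(t)$, whose output is measured only at selected time instances $t_1,\ldots,t_l\in\{0,1,2,\ldots\}$. The system is called sample-based observable for these instances if the sample-based observability matrix, i.e. the $l\times n$ matrix with rows $CA^{t_1},\ldots,CA^{t_l}$, has rank $n$. A pair $(M,C)$ with $M\in\mathbb{R}^{n\times n}$ is observable if the matrix with rows $C,CM,\ldots,CM^{n-1}$ has rank $n$. *)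

(* Defs.v *)
From HB Require Import structures.
From mathcomp Require Import all_boot all_algebra.
From mathcomp Require Import reals complex.
Set Implicit Arguments. Unset Strict Implicit. Unset Printing Implicit Defensive.
Import GRing.Theory Num.Theory.
Local Open Scope ring_scope.

Definition sample_obs_mx (R : pzRingType) (n l : nat)
  (A : 'M[R]_n) (C : 'rV[R]_n) (t : 'I_l -> nat) : 'M[R]_(l, n) :=
  \matrix_(i < l, j < n) (C *m A ^+ (t i)) 0 j.

Definition obs_mx (R : pzRingType) (n : nat) (M : 'M[R]_n) (C : 'rV[R]_n)
  : 'M[R]_n :=
  \matrix_(i < n, j < n) (C *m M ^+ i) 0 j.

Definition observable (R : fieldType) (n : nat) (M : 'M[R]_n) (C : 'rV[R]_n)
  : bool := \rank (obs_mx M C) == n.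

Definition complexify (R : rcfType) (n : nat) (A : 'M[R]_n) : 'M[R[i]]_n :=
  map_mx (fun x : R => (x%:C)%C) A.

(* Main.v *)
Require Import Defs.
From HB Require Import structures.
From mathcomp Require Import all_boot all_order all_algebra.
From mathcomp Require Import reals complex.
From Stdlib Require Classical_Prop.
From mathcomp Require Import zify.
Import Order.TTheory GRing.Theory Num.Theory.
Local Open Scope ring_scope.
Section SeqPart.
Variable R : realFieldType.

Fixpoint cls (s : seq R) (f : nat -> R) : Prop :=
  match s with
  | [::] => forall m, f m = 0
  | mu :: s' => cls s' (fun m => f m.+1 - mu * f m)
  end.

Lemma cls_ext s f g : (forall m, f m = g m) -> cls s f -> cls s g.
Proof.
elim: s f g => [|mu s IH] f g fg /=; first by move=> H m; rewrite -fg.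
by apply: IH => m; rewrite !fg.
Qed.

Fixpoint alt (k : nat) (e : R) (f : nat -> R) (lo : nat) : Prop :=
  match k with
  | 0 => exists m, (lo <= m)%N /\ 0 <= e * f m
  | k'.+1 => exists m, [/\ (lo <= m)%N, 0 <= e * f m & alt k' (- e) f m.+1]
  end.

Lemma alt_mono k e f lo lo' : (lo <= lo')%N -> alt k e f lo' -> alt k e f lo.
Proof.
case: k => [|k] /= H [m [H1 H2]]; exists m; first by split=> //; apply: leq_trans H1.
by case: H2 => *; split => //; apply: leq_trans H1.
Qed.

Lemma alt_first k e f lo : alt k e f lo ->
  exists m, [/\ (lo <= m)%N, 0 <= e * f m & alt k e f m].
Proof.
case: k => [|k] /= [m [H1 H2]].
  by exists m; split => //; exists m.
by case: H2 => H2 H3; exists m; split => //; exists m.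
Qed.

Lemma rolle (mu e : R) f a b : 0 <= mu -> (a < b)%N -> 0 <= e * f a -> 0 <= - e * f b ->
  exists p, [/\ (a <= p)%N, (p < b)%N & 0 <= - e * (f p.+1 - mu * f p)].
Proof.
move=> mu0 ab ha hb.
case: (boolP [exists p : 'I_b, (a <= p)%N && (- e * (f p.+1 - mu * f p) >= 0)]).
  by move=> /existsP [p /andP [h1 h2]]; exists p.
move=> /existsPn H.
have step : forall p, (a <= p)%N -> (p < b)%N -> 0 <= e * f p -> 0 < e * f p.+1.
  move=> p h1 h2 h3; have := H (Ordinal h2); rewrite /= h1 /= -ltNge.
  rewrite mulNr oppr_lt0 mulrBr subr_gt0 => h.
  by apply: le_lt_trans h; rewrite mulrCA; apply: mulr_ge0.
have key : forall k, (a + k.+1 <= b)%N -> 0 < e * f (a + k.+1)%N.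
  elim=> [|k IHk] hk.
    by rewrite addn1; apply: step => //; rewrite -addn1.
  rewrite addnS; apply: step; first exact: leq_addr.
    by rewrite -addnS.
  by apply/ltW/IHk; rewrite addnS in hk; apply: ltnW.
have := key (b - a).-1; rewrite prednK ?subn_gt0 // subnKC ?(ltnW ab) // leqnn.
move=> /(_ isT) hb'.
by move: hb; rewrite mulNr oppr_ge0 leNgt hb'.
Qed.

Arguments rolle {mu e f a b}.
Arguments alt_first {k e f lo}.
Lemma alt_diff (mu : R) f k e lo : 0 <= mu -> alt k.+1 e f lo ->
  alt k (- e) (fun m => f m.+1 - mu * f m) lo.
Proof.
move=> mu0; elim: k e lo => [|k IH] e lo /= [m [h1 h2 h3]].
  case: h3 => m' [h4 h5].
  have [p [p1 p2 p3]] := rolle mu0 h4 h2 h5.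
  by exists p; split => //; apply: leq_trans p1.
have [m' [h4 h5 h6]] := alt_first (h3 : alt k.+1 (- e) f m.+1).
have [p [p1 p2 p3]] := rolle mu0 h4 h2 h5.
exists p; split => //; first exact: leq_trans p1.
have := IH _ _ h6; rewrite opprK; apply: alt_mono.
exact: p2.
Qed.

Lemma main_seq s f e lo : all (fun mu => 0 < mu) s -> cls s f ->
  (exists m, f m != 0) -> e != 0 -> ~ alt (size s) e f lo.
Proof.
elim: s f e lo => [|mu s IH] f e lo /=.
  by move=> _ H [m]; rewrite H eqxx.
move=> /andP [mu0 hs] hc [m0 hm0] he ha.
pose g := fun m => f m.+1 - mu * f m.
case: (Classical_Prop.classic (exists m, g m != 0)).
  move=> hg; apply: (IH g (- e) lo hs hc hg).
    by rewrite oppr_eq0.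
  exact: alt_diff (ltW mu0) ha.
move=> Hg.
have fm : forall m, f m = mu ^+ m * f 0.
  elim=> [|m IHm]; first by rewrite expr0 mul1r.
  have : ~~ (g m != 0) by apply/negP => hgm; apply: Hg; exists m.
  rewrite negbK /g /= subr_eq0 => /eqP ->.
  by rewrite IHm exprS mulrA.
have f0 : f 0 != 0.
  by move: hm0; rewrite (fm m0) mulf_eq0 negb_or => /andP [].
case: ha => m [_ h1 h2].
have [m' [_ h3 _]] := alt_first h2.
have e1 : 0 <= e * f 0.
  by move: h1; rewrite (fm m) mulrCA pmulr_rge0 // exprn_gt0.
have e2 : e * f 0 <= 0.
  by move: h3; rewrite (fm m') mulNr oppr_ge0 mulrCA pmulr_rle0 // exprn_gt0.
have : e * f 0 == 0 by rewrite eq_le e1 e2.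
by rewrite mulf_eq0 (negbTE he) (negbTE f0).
Qed.

Lemma alt_zeros f (s : seq nat) k lo M e : sorted ltn s ->
  all (fun m => lo <= m)%N s -> (lo <= M)%N -> all (fun m => m < M)%N s ->
  (forall m, m \in s -> f m = 0) -> (k <= size s)%N ->
  0 <= e * (-1) ^+ k * f M -> alt k e f lo.
Proof.
elim: s k lo e => [|m s IH] [|k] lo e //=.
- by move=> _ _ hM _ _ _; rewrite expr0 mulr1 => h; exists M.
- by move=> _ _ hM _ _ _; rewrite expr0 mulr1 => h; exists M.
move=> hs /andP [hlo hall] hM /andP [hmM hallM] hz hk he.
exists m; split => //; first by rewrite hz ?mem_head // mulr0.
apply: (IH k m.+1 (- e)).
- exact: path_sorted hs.
- exact: order_path_min ltn_trans hs.
- exact: hmM.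
- exact: hallM.
- by move=> x hx; apply: hz; rewrite in_cons hx orbT.
- exact: hk.
by rewrite !mulNr; move: he; rewrite exprS mulN1r mulrN mulNr.
Qed.

Lemma leq_sumn_mem (s : seq nat) x : x \in s -> (x <= sumn s)%N.
Proof.
elim: s => [|a s IH] //=; rewrite in_cons => /orP [/eqP ->|h].
  exact: leq_addr.
exact: leq_trans (IH h) (leq_addl _ _).
Qed.

Lemma main_zeros s f (z : seq nat) : all (fun mu => 0 < mu) s -> cls s f ->
  (exists m, f m != 0) -> uniq z -> (forall m, m \in z -> f m = 0) ->
  (size s <= size z)%N -> False.
Proof.
move=> hs hc hf hu hz hsz.
pose z' := sort leq z.
pose M := (sumn z').+1.
pose c : R := if 0 <= f M then 1 else -1.
pose e : R := (-1) ^+ (size s) * c.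
have hc1 : e * (-1) ^+ (size s) = c.
  by rewrite /e mulrAC -exprMn mulrNN mulr1 expr1n mul1r.
have he : e != 0.
  rewrite /e mulf_neq0 ?expf_neq0 ?oppr_eq0 ?oner_eq0 // /c.
  by case: ifP; rewrite ?oppr_eq0 oner_eq0.
apply: (@main_seq s f e 0 hs hc hf he).
apply: (@alt_zeros f z' (size s) 0 M e).
- by rewrite ltn_sorted_uniq_leq sort_uniq hu /=; exact: (sort_sorted leq_total).
- by apply/allP => x.
- by [].
- by apply/allP => x hx; rewrite ltnS leq_sumn_mem.
- by move=> m; rewrite mem_sort; apply: hz.
- by rewrite size_sort.
rewrite hc1 /c; case: ifP => [h|h]; first by rewrite mul1r.
have {}h : f M < 0 by rewrite ltNge h.

by rewrite mulN1r oppr_ge0 ltW.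
Qed.
Lemma cls_mx n (B : 'M[R]_n.+1) (C : 'rV_n.+1) s (y : 'cV_n.+1) :
  horner_mx B (\prod_(mu <- s) ('X - mu%:P)) *m y = 0 ->
  cls s (fun m => (C *m B ^+ m *m y) 0 0).
Proof.
elim: s y => [|mu s IH] y /=.
  by rewrite big_nil rmorph1 mul1mx => -> m; rewrite mulmx0 mxE.
rewrite big_cons mulrC rmorphM /= rmorphB /= horner_mx_X horner_mx_C => h.
have := IH ((B - mu%:M) *m y); rewrite mulmxA => /(_ h).
apply: cls_ext => m.
rewrite mulmxBl mul_scalar_mx mulmxBr -scalemxAr mulmxA.
have -> : C *m B ^+ m *m B = C *m B ^+ m.+1 by rewrite -mulmxA mulmxE -exprSr.
rewrite mxE; congr (_ + _); rewrite mxE; congr (- _); by rewrite mxE.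
Qed.


Lemma obs_zero n (B : 'M[R]_n) (C : 'rV_n) (y : 'cV_n) : observable B C ->
  (forall m, (C *m B ^+ m *m y) 0 0 = 0) -> y = 0.
Proof.
move=> hO hz.
have Oy : obs_mx B C *m y = 0.
  apply/matrixP => i j; rewrite (ord1 j).
  have -> : (obs_mx B C *m y) i 0 = (C *m B ^+ i *m y) 0 0.
    by rewrite !mxE; apply: eq_bigr => k _; rewrite !mxE.
  by rewrite hz mxE.
have hu : obs_mx B C \in unitmx by rewrite -row_free_unit.
by rewrite -(mulKmx hu y) Oy mulmx0.
Qed.
End SeqPart.

Lemma real_roots (R : realType) n (A : 'M[R]_n) :
  (forall z : R[i], eigenvalue (complexify A) z -> z != 0) ->
  (forall z : R[i], eigenvalue (complexify A) z -> complex.Im z = 0) ->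
  exists r : seq R, char_poly A = \prod_(x <- r) ('X - x%:P) /\ all (fun x => x != 0) r.
Proof.
move=> hnz him.
have [s hs] := closed_field_poly_normal (char_poly (complexify A)).
rewrite (monicP (char_poly_monic _)) scale1r in hs.
have hev : forall z, z \in s -> eigenvalue (complexify A) z.
  by move=> z zs; rewrite eigenvalue_root_char hs root_prod_XsubC.
have hre : forall z, z \in s -> z = ((complex.Re z)%:C)%C.
  move=> z zs; rewrite {1}[z]complexE him ?hev // mulr0 addr0 //.
exists (map (@complex.Re R) s); split.
  apply: (@map_poly_inj _ _ (real_complex R)).
  rewrite map_char_poly.
  rewrite -[map_mx _ A]/(complexify A) hs rmorph_prod big_map.
  apply: eq_big_seq => z zs; rewrite rmorphB /= map_polyX map_polyC /= -hre //.
rewrite all_map; apply/allP => z zs /=.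
apply: contraNneq (hnz z (hev z zs)) => h0.
by rewrite (hre z zs) h0.
Qed.

Lemma pow_half (R : realFieldType) n (A : 'M[R]_n.+1) (C : 'rV_n.+1) (y : 'cV_n.+1) k :
  (C *m (A ^+ 2) ^+ (k./2) *m (if odd k then A *m y else y)) 0 0
  = (C *m A ^+ k *m y) 0 0.
Proof.
rewrite -{3}(odd_double_half k) addnC exprD -muln2 mulnC exprM.
by case: (odd k); rewrite ?expr1 ?expr0 ?mulr1 // -mulmxE !mulmxA.
Qed.

Theorem theorem1 (R : realType) (n : nat) (A : 'M[R]_n) (C : 'rV[R]_n) :
  (0 < n)%N ->
  observable A C ->
  (forall z : R[i], eigenvalue (complexify A) z -> z != 0) ->
  (forall z : R[i], eigenvalue (complexify A) z -> complex.Im z = 0) ->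
  observable (A ^+ 2) C ->
  forall t : 'I_(2 * n - 1) -> nat, injective t ->
  \rank (sample_obs_mx A C t) = n.
Proof.
case: n A C => [//|n'] A C _ hobs hnz him hobs2 t tinj.
have [r [hchar hr0]] := @real_roots R _ A hnz him.
pose B := A ^+ 2.
pose r2 := map (fun x => x ^+ 2) r.
have hP : horner_mx B (\prod_(mu <- r2) ('X - mu%:P)) = 0.
  rewrite big_map rmorph_prod.
  have -> : \prod_(x <- r) horner_mx B ('X - (x ^+ 2)%:P) =
      horner_mx A (\prod_(x <- r) (('X - x%:P) * ('X + x%:P))).
    rewrite rmorph_prod; apply: eq_bigr => x _.
    rewrite -subr_sqr !rmorphB /= !rmorphXn /= !horner_mx_X !horner_mx_C.
    by [].
  by rewrite big_split /= -hchar rmorphM /= Cayley_Hamilton mul0r.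
have hpos : all (fun mu => 0 < mu) r2.
  rewrite all_map; apply/allP => x xr /=.
  by rewrite lt0r sqr_ge0 expf_neq0 ?andbT //; apply: (allP hr0).
have hsize : size r2 = n'.+1.
  have := size_char_poly A; rewrite hchar size_prod_XsubC size_map.
  by case.
have hAu : A \in unitmx.
  rewrite unitmxE unitfE; apply/eqP => hd0.
  have : (char_poly A).[0] != 0.
    rewrite hchar horner_prod prodf_seq_neq0; apply/allP => x xr.
    by rewrite hornerXsubC sub0r oppr_eq0 (allP hr0).
  by rewrite horner_coef0 char_poly_det hd0 mulr0 eqxx.
rewrite -mxrank_tr; apply/eqP; apply: inj_row_free => v hv.
pose y := v^T.
have hy : forall i, (C *m A ^+ (t i) *m y) 0 0 = 0.
  move=> i; transitivity ((v *m (sample_obs_mx A C t)^T) 0 i); last first.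
    by rewrite hv mxE.
  by rewrite !mxE; apply: eq_bigr => j _; rewrite !mxE mulrC.
suff hy0 : y = 0 by rewrite -[v]trmxK -/y hy0 trmx0.
pose idx (b : bool) := [seq i <- enum 'I_(2 * n'.+1 - 1) | odd (t i) == b].
have hcount : (size (idx true) + size (idx false))%N = (2 * n'.+1 - 1)%N.
  rewrite !size_filter -[X in _ = X]size_enum_ord.
  rewrite -(count_predC (fun i => odd (t i) == true)); congr (_ + _)%N.
  by apply: eq_count => i /=; case: odd.
have [b hb] : exists b, (n'.+1 <= size (idx b))%N.
  case: (leqP n'.+1 (size (idx true))) => h; first by exists true.
  by exists false; lia.
pose yb := if b then A *m y else y.
pose z := [seq (t i)./2 | i <- idx b].
have hzu : uniq z.
  rewrite map_inj_in_uniq; first exact/filter_uniq/enum_uniq.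
  move=> i j.
  rewrite !mem_filter => /andP [/eqP hi _] /andP [/eqP hj _] hij; apply: tinj.
  by rewrite -(odd_double_half (t i)) -(odd_double_half (t j)) hi hj hij.
have hz : forall m, m \in z -> (C *m B ^+ m *m yb) 0 0 = 0.
  move=> m hm; have [k0] := mapP hm; rewrite mem_filter => /andP [/eqP hi _] ->.
  by rewrite /yb -hi pow_half hy.
have hyP : horner_mx B (\prod_(mu <- r2) ('X - mu%:P)) *m yb = 0.
  by rewrite hP mul0mx.
have hc := @cls_mx R n' B C r2 yb hyP.
have hg : forall m, (C *m B ^+ m *m yb) 0 0 = 0.
  move=> m; apply/eqP/negPn/negP => hm.
  apply: (@main_zeros R r2 _ z hpos hc _ hzu hz); first by exists m.
  by rewrite hsize size_map.
have hyb := @obs_zero R _ B C yb hobs2 hg.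
have : (if b then A *m y else y) = 0 := hyb.
case: (b) => // hAy.
by rewrite -(mulKmx hAu y) hAy mulmx0.
Qed.
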